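(* If a graph $G$ has three distinct cutvertices lying in the same connected component of $G$, then $G$ does not belong to DH $\cap$ co-DH.
   Context: All graphs are finite and simple. A cutvertex is a vertex whose deletion increases the number of connected components. A graph is distance-hereditary if it has no induced subgraph isomorphic to a hole (an induced cycle of length at least $5$), the house (a $5$-cycle plus one chord), the domino (a $6$-cycle $v_1\dots v_6$ plus the chord $v_1v_4$), or the gem ($P_4$ plus a vertex adjacent to all four of its vertices). DH $\cap$ co-DH is the class of graphs $G$ such that both $G$ and its complement are distance-hereditary. *)

(* Defs.v *)
From mathcomp Require Import all_boot.
Set Implicit Arguments. Unset Strict Implicit. Unset Printing Implicit Defensive.

(* A finite simple graph: vertex type T : finType, adjacency e : rel T,
   assumed symmetric and irreflexive in the theorem. *)

Definition connect_in (T : finType) (e : rel T) (S : {set T}) : rel T :=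
  connect (fun a b => [&& a \in S, b \in S & e a b]).

Definition components (T : finType) (e : rel T) (S : {set T}) : {set {set T}} :=
  [set [set y in S | connect_in e S x y] | x in S].

Definition ncomp (T : finType) (e : rel T) (S : {set T}) : nat :=
  #|components e S|.

Definition cutvertex (T : finType) (e : rel T) (v : T) : bool :=
  ncomp e [set: T] < ncomp e [set~ v].

Definition compl_rel (T : finType) (e : rel T) : rel T :=
  fun x y => (x != y) && ~~ e x y.

Definition has_induced (U T : finType) (h : rel U) (e : rel T) : Prop :=
  exists f : U -> T, injective f /\ forall a b, h a b = e (f a) (f b).

Definition cycle_rel (n : nat) : rel 'I_n :=
  fun i j => (val j == (val i).+1 %% n) || (val i == (val j).+1 %% n).

Definition edge_is (n a b : nat) : rel 'I_n :=
  fun i j => ((val i == a) && (val j == b)) || ((val i == b) && (val j == a)).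

Definition house_rel : rel 'I_5 :=
  fun i j => @cycle_rel 5 i j || edge_is 1 4 i j.

Definition domino_rel : rel 'I_6 :=
  fun i j => @cycle_rel 6 i j || edge_is 0 3 i j.

Definition gem_rel : rel 'I_5 :=
  fun i j => [|| edge_is 0 1 i j, edge_is 1 2 i j, edge_is 2 3 i j,
                 ((val i == 4) && (val j != 4)) | ((val j == 4) && (val i != 4))].

Definition distance_hereditary (T : finType) (e : rel T) : Prop :=
  (forall n, 5 <= n -> ~ has_induced (@cycle_rel n) e) /\
  ~ has_induced house_rel e /\
  ~ has_induced domino_rel e /\
  ~ has_induced gem_rel e.

(* Main.v *)
Require Import Defs.
From mathcomp Require Import all_boot.
Set Implicit Arguments. Unset Strict Implicit. Unset Printing Implicit Defensive.

Lemma ci_edge (T : finType) (e : rel T) (S : {set T}) x y :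
  x \in S -> y \in S -> e x y -> connect_in e S x y.
Proof. by move=> xS yS exy; apply: connect1; rewrite /= xS yS. Qed.

Lemma ci_csym (T : finType) (e : rel T) (S : {set T}) :
  symmetric e -> connect_sym (fun a b => [&& a \in S, b \in S & e a b]).
Proof. by move=> se; apply: sym_connect_sym => a b; rewrite andbCA se. Qed.

Lemma ci_rsym (T : finType) (e : rel T) (S : {set T}) :
  symmetric e -> symmetric (fun a b => [&& a \in S, b \in S & e a b]).
Proof. by move=> se a b; rewrite andbCA se. Qed.

Lemma ci_sym (T : finType) (e : rel T) (S : {set T}) : symmetric e ->
  forall x y, connect_in e S x y = connect_in e S y x.
Proof. by move=> se; apply: ci_csym. Qed.

Lemma ci_trans (T : finType) (e : rel T) (S : {set T}) x y z :
  connect_in e S x y -> connect_in e S y z -> connect_in e S x z.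
Proof. exact: connect_trans. Qed.

Lemma ci_mem (T : finType) (e : rel T) (S : {set T}) a x : symmetric e ->
  connect_in e S a x -> a \in S -> x \in S.
Proof.
move=> se c aS; rewrite -(closed_connect _ c) //.
by move=> y z /and3P[-> -> _].
Qed.

Lemma exit_edge (T : finType) (r : rel T) (A : {pred T}) a b :
  symmetric r -> connect r a b -> a \in A -> b \notin A ->
  exists x y, [/\ x \in A, y \notin A & r x y].
Proof.
move=> sr c aA bA.
suff /existsP[x /existsP[y /and3P[]]] : [exists x, exists y, [&& x \in A, y \notin A & r x y]].
  by move=> xA yA rxy; exists x, y.
apply: contraT => /existsPn H.
have cl : closed r A.
  move=> x y rxy; apply/idP/idP => [xA|yA]; apply: contraT => nA.
    by move/existsPn: (H x) => /(_ y); rewrite xA rxy nA.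
  by move/existsPn: (H y) => /(_ x); rewrite yA sr rxy nA.
have := closed_connect cl c.
by rewrite aA (negbTE bA).
Qed.

Lemma ci_same (T : finType) (e : rel T) (S : {set T}) x y : symmetric e ->
  connect_in e S x y -> connect_in e S x =1 connect_in e S y.
Proof. move=> se; exact: (same_connect (ci_csym S se)). Qed.

Lemma card_coarse (T U V : finType) (f : T -> U) (g : T -> V) (A : {set T}) :
  {in A &, forall x y, g x = g y -> f x = f y} -> #|f @: A| <= #|g @: A|.
Proof.
move=> H.
case: (set_0Vmem A) => [->|[x0 x0A]]; first by rewrite !imset0 !cards0.
pose h Z := f (odflt x0 [pick x in A | g x == Z]).
have -> : f @: A = h @: (g @: A).
  rewrite -imset_comp; apply: eq_in_imset => x xA /=; rewrite /h.
  case: pickP => [y /andP[yA /eqP gy] | no] /=; first by apply: H.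
  by have := no x; rewrite xA eqxx.
exact: leq_imset_card.
Qed.

Lemma cut_pair (T : finType) (e : rel T) u : symmetric e -> cutvertex e u ->
  exists a b, [/\ a \in [set~ u], b \in [set~ u], connect_in e [set: T] a b
                & ~~ connect_in e [set~ u] a b].
Proof.
move=> se cu.
suff /existsP[a /existsP[b /and4P[]]] : [exists a, exists b, [&& a \in [set~ u], b \in [set~ u],
    connect_in e [set: T] a b & ~~ connect_in e [set~ u] a b]].
  by move=> *; exists a, b.
apply: contraT => /existsPn H.
move: cu; rewrite /cutvertex /ncomp /components.
rewrite ltnNge => /negP nle; exfalso; apply: nle.
apply: (leq_trans (card_coarse (g := fun x => [set y in [set: T] | connect_in e [set: T] x y]) _)).
  2: by apply: subset_leq_card; apply: imsetS; exact: subsetT.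
move=> x y xS yS eqT.
have cT : connect_in e [set: T] x y.
  have : y \in [set y0 in [set: T] | connect_in e [set: T] x y0].
    by rewrite eqT inE in_setT /=; apply: connect0.
  by rewrite inE in_setT.
have cS : connect_in e [set~ u] x y.
  move/existsPn: (H x) => /(_ y); rewrite xS yS cT /=; exact: negbNE.
by apply/setP => z; rewrite !inE (ci_same se cS).
Qed.

Lemma sep_step (T : finType) (e : rel T) u v c d : symmetric e ->
  c \in [set~ u] -> connect_in e [set: T] c d -> ~~ connect_in e [set~ u] c d ->
  ~~ connect_in e [set~ u] c v -> exists x, e u x /\ ~~ connect_in e [set~ u] x v.
Proof.
move=> se cS ccd ncd ncv.
have [x [y [xA yA rxy]]] := exit_edge (A := connect_in e [set~ u] c) (ci_rsym [set: T] se) ccd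
  (connect0 _ _) ncd.
move/and3P: rxy => [_ _ exy].
have xS : x \in [set~ u] by apply: ci_mem xA cS.
case: (eqVneq y u) => [yu|ynu].
  subst y; exists x; split; first by rewrite se.
  by apply: contra ncv => xv; apply: ci_trans xA xv.
exfalso; move/negP: yA; apply; apply: ci_trans xA _.
by apply: ci_edge => //; rewrite !inE.
Qed.

Lemma cut_sep (T : finType) (e : rel T) u v : symmetric e -> cutvertex e u ->
  exists x, e u x /\ ~~ connect_in e [set~ u] x v.
Proof.
move=> se cu; have [a [b [aS bS cab ncab]]] := cut_pair se cu.
case cav: (connect_in e [set~ u] a v).
  apply: (sep_step (c := b) (d := a)) => //.
  - by rewrite (ci_sym _ se).
  - by rewrite (ci_sym _ se).
  - apply: contra ncab => cbv; apply: ci_trans cav _; by rewrite (ci_sym _ se).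
by apply: (sep_step (c := a) (d := b)) => //; rewrite cav.
Qed.

Fixpoint ball (T : finType) (e : rel T) (s : T) (n : nat) : {set T} :=
  if n is n'.+1 then ball e s n' :|: [set y | [exists x in ball e s n', e x y]]
  else [set s].

Lemma ballS (T : finType) (e : rel T) s n x y :
  x \in ball e s n -> e x y -> y \in ball e s n.+1.
Proof.
by move=> xb exy; rewrite /= !inE; apply/orP; right; apply/existsP; exists x; rewrite xb.
Qed.

Lemma ballP (T : finType) (e : rel T) s n y :
  y \in ball e s n.+1 -> y \in ball e s n \/ exists x, x \in ball e s n /\ e x y.
Proof.
rewrite /= !inE => /orP[->|/existsP[x /andP[xb exy]]]; first by left.
by right; exists x.
Qed.

Lemma ball_mono (T : finType) (e : rel T) s m n x :
  m <= n -> x \in ball e s m -> x \in ball e s n.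
Proof.
move=> /subnKC <-; elim: (n - m) => [|k IH]; first by rewrite addn0.
by move=> xb; rewrite addnS /= inE IH.
Qed.

Lemma ball0 (T : finType) (e : rel T) s x : (x \in ball e s 0) = (x == s).
Proof. by rewrite /= inE. Qed.

Lemma ball_connect (T : finType) (e : rel T) s t :
  connect e s t -> exists n, t \in ball e s n.
Proof.
move=> /connectP[p pth ->]; exists (size p).
elim/last_ind: p pth => [|q y IH]; first by rewrite /= inE.
rewrite rcons_path last_rcons size_rcons => /andP[pq ey].
exact: ballS (IH pq) ey.
Qed.

Lemma ball_down (T : finType) (e : rel T) s k t :
  t \in ball e s k.+3 -> t \notin ball e s k.+2 ->
  exists q, [/\ q \in ball e s 3, q \notin ball e s 2 & connect_in e [set~ s] q t].
Proof.
elim: k t => [|k IH] t tb ntb; first by exists t; split => //; apply: connect0.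
have [tb'|[x [xb ext]]] := ballP tb; first by rewrite tb' in ntb.
have nxb : x \notin ball e s k.+2.
  by apply: contra ntb => xb'; apply: ballS xb' ext.
have [q [qb nqb cqx]] := IH x xb nxb.
exists q; split => //; apply: ci_trans cqx _; apply: ci_edge ext; rewrite !inE.
- apply: contra nxb => /eqP ->; apply: (ball_mono (m := 0)) => //; by rewrite ball0.
- apply: contra ntb => /eqP ->; apply: (ball_mono (m := 0)) => //; by rewrite ball0.
Qed.

Lemma house_of_P5 (T : finType) (e : rel T) (a b c d x : T) : symmetric e ->
  uniq [:: c; a; d; b; x] ->
  e a b -> e b c -> e c d -> e d x ->
  e a c = false -> e a d = false -> e a x = false -> e b d = false ->
  e b x = false -> e c x = false ->
  has_induced house_rel (compl_rel e).
Proof.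
move=> se U ab bc cd dx ac ad ax bd bx cx.
pose g (i : 'I_5) := nth a [:: c; a; d; b; x] i.
have NU : forall i j : 'I_5, (g i == g j) = (i == j).
  by move=> i j; rewrite /g nth_uniq.
exists g; split.
  by move=> i j /eqP; rewrite NU => /eqP.
move=> i j; rewrite /compl_rel NU /g.
case: i => [[|[|[|[|[|i]]]]] Hi] //; case: j => [[|[|[|[|[|j]]]]] Hj] //=;
rewrite ?(se b a) ?(se c a) ?(se d a) ?(se x a) ?(se c b) ?(se d b) ?(se x b) ?(se d c) ?(se x c) ?(se x d);
rewrite ?ab ?bc ?cd ?dx ?ac ?ad ?ax ?bd ?bx ?cx //.
Qed.

Lemma gem_of_P4K1 (T : finType) (e : rel T) (p q r s z : T) : symmetric e ->
  uniq [:: q; s; p; r; z] ->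
  e p q -> e q r -> e r s ->
  e p r = false -> e p s = false -> e q s = false ->
  e p z = false -> e q z = false -> e r z = false -> e s z = false ->
  has_induced gem_rel (compl_rel e).
Proof.
move=> se U pq qr rs pr ps qs pz qz rz sz.
pose g (i : 'I_5) := nth p [:: q; s; p; r; z] i.
have NU : forall i j : 'I_5, (g i == g j) = (i == j).
  by move=> i j; rewrite /g nth_uniq.
exists g; split.
  by move=> i j /eqP; rewrite NU => /eqP.
move=> i j; rewrite /compl_rel NU /g.
case: i => [[|[|[|[|[|i]]]]] Hi] //; case: j => [[|[|[|[|[|j]]]]] Hj] //=;
rewrite ?(se q p) ?(se r p) ?(se s p) ?(se z p) ?(se r q) ?(se s q) ?(se z q) ?(se s r) ?(se z r) ?(se z s);
rewrite ?pq ?qr ?rs ?pr ?ps ?qs ?pz ?qz ?rz ?sz //.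
Qed.

Lemma uniq5 (T : eqType) (a b c d x : T) : a != b -> a != c -> a != d -> a != x ->
  b != c -> b != d -> b != x -> c != d -> c != x -> d != x -> uniq [:: a; b; c; d; x].
Proof.
by move=> ab ac ad ax bc bd bx cd cx dx; rewrite /= !inE !negb_or ab ac ad ax bc bd bx cd cx dx.
Qed.

Lemma nin_neq (T : finType) (A : {set T}) x y : x \in A -> y \notin A -> x != y.
Proof. by move=> xA; apply: contra => /eqP <-. Qed.

Lemma away (T : finType) (e : rel T) s t x z : symmetric e -> x != s -> z != s ->
  connect_in e [set~ s] z t -> ~~ connect_in e [set~ s] x t -> (x != z) /\ (e x z = false).
Proof.
move=> se xs zs cz nx; split; first by apply: contra nx => /eqP ->.
apply/negbTE; apply: contra nx => exz; apply: ci_trans cz; apply: ci_edge exz; by rewrite !inE.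
Qed.

Lemma ci_e (T : finType) (e : rel T) (S : {set T}) x y :
  x \in S -> y \in S -> e x y -> forall z, connect_in e S y z -> connect_in e S x z.
Proof. by move=> xS yS exy z; apply: ci_trans; apply: ci_edge. Qed.

Lemma key_pair (T : finType) (e : rel T) s t : symmetric e -> irreflexive e ->
  cutvertex e s -> cutvertex e t -> s != t -> e s t = false -> connect e s t ->
  has_induced house_rel (compl_rel e).
Proof.
move=> se ie cs ct st nst cst.
have [xs [sxs nxs]] := cut_sep t se cs.
have xss : xs != s by apply: contraTneq sxs => ->; rewrite ie.
have ts : t != s by rewrite eq_sym.
have Ct : connect_in e [set~ s] t t by apply: connect0.
have [n tn min] := ex_minnP (ball_connect cst).
have b0 : s \in ball e s 0 by rewrite ball0.
move: n tn min => [|[|[|n]]] tn min.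
- by move: tn; rewrite ball0 (negbTE ts).
- have [|[y [yb ey]]] := ballP tn; first by rewrite ball0 (negbTE ts).
  by move: yb ey; rewrite ball0 => /eqP ->; rewrite nst.
- have [tb|[p [pb ept]]] := ballP tn; first by have := min 1 tb.
  have [|[y [yb esp]]] := ballP pb.
    by rewrite ball0 => /eqP E; rewrite E nst in ept.
  move: yb esp; rewrite ball0 => /eqP -> esp.
  have [xt [txt nxt]] := cut_sep s se ct.
  have xtt : xt != t by apply: contraTneq txt => ->; rewrite ie.
  have ps : p != s by apply: contraTneq esp => ->; rewrite ie.
  have pt : p != t by apply: contraTneq ept => ->; rewrite ie.
  have Cp : connect_in e [set~ s] p t by apply: ci_edge => //; rewrite !inE.
  have xts : xt != s by apply: contra nxt => /eqP ->; apply: connect0.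
  have Cxt : connect_in e [set~ s] xt t by apply: ci_edge; rewrite ?inE // se.
  have [xsp xsp'] := away se xss ps Cp nxs.
  have [xst xst'] := away se xss ts Ct nxs.
  have [xsxt xsxt'] := away se xss xts Cxt nxs.
  have Ds : connect_in e [set~ t] s s by apply: connect0.
  have Dp : connect_in e [set~ t] p s by apply: ci_edge; rewrite ?inE // se.
  have [xtp xtp'] := away se xtt pt Dp nxt.
  have [xts' xts''] := away se xtt st Ds nxt.
  apply: (house_of_P5 (a := xs) (b := s) (c := p) (d := t) (x := xt)) => //.
  + apply: uniq5; rewrite // 1?eq_sym //.
  + by rewrite se.
  + by rewrite se.
  + by rewrite se.
- have ntb : t \notin ball e s n.+2.
    by apply/negP => tb; have := min _ tb; rewrite ltnn.
  have [q [qb nqb Cq]] := ball_down tn ntb.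
  have [|[p2 [p2b ep2q]]] := ballP qb; first by rewrite (negbTE nqb).
  have np2b : p2 \notin ball e s 1 by apply: contra nqb => h; apply: ballS h ep2q.
  have [|[p1 [p1b ep1p2]]] := ballP p2b; first by rewrite (negbTE np2b).
  have np1b : p1 \notin ball e s 0 by apply: contra np2b => h; apply: ballS h ep1p2.
  have [|[y [yb esp1]]] := ballP p1b; first by rewrite (negbTE np1b).
  move: yb esp1; rewrite ball0 => /eqP -> esp1.
  have b1 : s \in ball e s 1 by apply: (ball_mono (m := 0)).
  have b2 : s \in ball e s 2 by apply: (ball_mono (m := 0)).
  have p1b2 : p1 \in ball e s 2 by apply: (ball_mono (m := 1)).
  have sp1 : s != p1 by apply: nin_neq b0 np1b.
  have sp2 : s != p2 by apply: nin_neq b1 np2b.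
  have sq : s != q by apply: nin_neq b2 nqb.
  have p1p2 : p1 != p2 by apply: nin_neq p1b np2b.
  have p1q : p1 != q by apply: nin_neq p1b2 nqb.
  have p2q : p2 != q by apply: nin_neq p2b nqb.
  have esp2 : e s p2 = false by apply/negP => h; rewrite (ballS b0 h) in np2b.
  have esq : e s q = false.
    by apply/negP => h; rewrite (ball_mono (m := 1) _ (ballS b0 h)) in nqb.
  have ep1q : e p1 q = false by apply/negP => h; rewrite (ballS p1b h) in nqb.
  have Cp2 : connect_in e [set~ s] p2 t.
    by apply: (ci_e (y := q)) => //; rewrite !inE eq_sym.
  have Cp1 : connect_in e [set~ s] p1 t.
    by apply: (ci_e (y := p2)) => //; rewrite !inE eq_sym.
  have [x1 x1'] := away se xss (ltac:(by rewrite eq_sym) : p1 != s) Cp1 nxs.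
  have [x2 x2'] := away se xss (ltac:(by rewrite eq_sym) : p2 != s) Cp2 nxs.
  have [x3 x3'] := away se xss (ltac:(by rewrite eq_sym) : q != s) Cq nxs.
  apply: (house_of_P5 (a := xs) (b := s) (c := p1) (d := p2) (x := q)) => //.
  + apply: uniq5; rewrite // 1?eq_sym //.
  + by rewrite se.
Qed.

Lemma triangle (T : finType) (e : rel T) u v w : symmetric e -> irreflexive e ->
  cutvertex e u -> cutvertex e v -> cutvertex e w ->
  u != v -> v != w -> u != w -> e u v -> e v w -> e u w ->
  has_induced gem_rel (compl_rel e).
Proof.
move=> se ie cu cv cw uv vw uw euv evw euw.
have [xu [uxu nxu]] := cut_sep v se cu.
have [xv [vxv nxv]] := cut_sep u se cv.
have [xw [wxw nxw]] := cut_sep u se cw.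
have xuu : xu != u by apply: contraTneq uxu => ->; rewrite ie.
have xvv : xv != v by apply: contraTneq vxv => ->; rewrite ie.
have xww : xw != w by apply: contraTneq wxw => ->; rewrite ie.
have vu : v != u by rewrite eq_sym.
have wu : w != u by rewrite eq_sym.
have wv : w != v by rewrite eq_sym.
have xvu : xv != u by apply: contra nxv => /eqP ->; apply: connect0.
have Cv : connect_in e [set~ u] v v by apply: connect0.
have Cxv : connect_in e [set~ u] xv v by apply: ci_edge; rewrite ?inE // se.
have [a1 a1'] := away se xuu vu Cv nxu.
have [a2 a2'] := away se xuu xvu Cxv nxu.
have Du : connect_in e [set~ v] u u by apply: connect0.
have [a3 a3'] := away se xvv uv Du nxv.
have Eu : connect_in e [set~ w] u u by apply: connect0.
have Ev : connect_in e [set~ w] v u by apply: ci_edge; rewrite ?inE // se.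
have [a4 a4'] := away se xww uw Eu nxw.
have [a5 a5'] := away se xww vw Ev nxw.
have Cw : connect_in e [set~ u] w v by apply: ci_edge; rewrite ?inE // se.
have Cxw : connect_in e [set~ u] xw v by apply: (ci_e (y := w)) => //; rewrite ?inE // se.
have Dw : connect_in e [set~ v] w u by apply: ci_edge; rewrite ?inE // se.
have Dxw : connect_in e [set~ v] xw u by apply: (ci_e (y := w)) => //; rewrite ?inE // se.
have [a6 a6'] := away se xuu a4 Cxw nxu.
have [a7 a7'] := away se xvv a5 Dxw nxv.
apply: (gem_of_P4K1 (p := xu) (q := u) (r := v) (s := xv) (z := xw)) => //.
- apply: uniq5; rewrite // 1?eq_sym //.
- by rewrite se.
- by rewrite se.
- by rewrite se.
- by rewrite se.
Qed.

Lemma ci_setT (T : finType) (e : rel T) x y : connect_in e [set: T] x y = connect e x y.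
Proof. by apply: eq_connect => a b; rewrite !in_setT. Qed.

Theorem lemma4 (T : finType) (e : rel T) :
  symmetric e -> irreflexive e ->
  (exists u v w : T,
      [&& u != v, v != w & u != w] /\
      [&& cutvertex e u, cutvertex e v & cutvertex e w] /\
      connect_in e [set: T] u v /\ connect_in e [set: T] u w) ->
  ~ (distance_hereditary e /\ distance_hereditary (compl_rel e)).
Proof.
move=> se ie [u [v [w [/and3P[uv vw uw] [/and3P[cu cv cw] [cuv cuw]]]]]].
move=> [_ [_ [Hh [_ Hg]]]].
rewrite !ci_setT in cuv cuw.
have cvw : connect e v w.
  by apply: connect_trans cuw; rewrite (sym_connect_sym se).
case euv: (e u v); last by apply: Hh; exact: (key_pair se ie cu cv uv euv cuv).
case evw: (e v w); last by apply: Hh; exact: (key_pair se ie cv cw vw evw cvw).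
case euw: (e u w); last by apply: Hh; exact: (key_pair se ie cu cw uw euw cuw).
by apply: Hg; exact: (triangle se ie cu cv cw uv vw uw euv evw euw).
Qed.
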